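(* Let $\mathcal{G}$ be a finite weighted coloured--edge graph with $n\ge2$ vertices and $k$ colours such that for every ordered pair of vertices $(x,y)$ and every colour $c$ there is at most one edge from $x$ to $y$ of colour $c$. Then for any vertices $u\ne v$, the number of minimal paths from $u$ to $v$ (counting all of them, including distinct paths with equal weight vectors) is at most $k(k+1)^{n-2}$.
   Context: A weighted coloured--edge graph $\mathcal{G}=\langle V,E,\omega,\lambda\rangle$ consists of a directed multigraph with vertex set $V$ and edge set $E$ (each edge $e$ has an initial vertex and a distinct terminal vertex), a weight function $\omega:E\to\mathbb{R}^+$ (strictly positive reals), and a surjective colour function $\lambda:E\to M$ onto a set $M$ of colours; $k=|M|$. A path from $u$ to $v$ is a sequence of edges $e_1,\dots,e_l$ ($l\ge1$) such that the initial vertex of $e_1$ is $u$, the terminal vertex of $e_l$ is $v$, the terminal vertex of $e_i$ is the initial vertex of $e_{i+1}$, and no vertex is visited twice. For a path $p$ and colour $c$, $\omega_c(p)$ is the sum of $\omega(e)$ over edges $e$ of $p$ with $\lambda(e)=c$. For paths $p,q$ from $u$ to $v$, $p\le q$ means $\omega_c(p)\le\omega_c(q)$ for all $c\in M$. A path $p$ from $u$ to $v$ is minimal if there is no path $q$ from $u$ to $v$ with $q\le p$ and $\omega_c(q)<\omega_c(p)$ for some colour $c$. *)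

(* Defs.v *)
From HB Require Import structures.
From mathcomp Require Import all_boot all_order all_algebra.
Set Implicit Arguments. Unset Strict Implicit. Unset Printing Implicit Defensive.
Import Order.TTheory GRing.Theory Num.Theory.
Local Open Scope ring_scope.

(* A weighted coloured-edge graph is given by: a finite vertex type V, a finite
   edge type E, a finite colour type M, initial / terminal vertex maps
   src / dst : E -> V, a colour map col : E -> M and a weight map w : E -> R
   into an ordered field R (the reals in the paper). *)

Definition path_vertices (V E : Type) (src dst : E -> V) (p : seq E) : seq V :=
  match p with
  | [::] => [::]
  | e :: _ => src e :: map dst p
  end.

Definition is_cpath (V : eqType) (E : Type) (src dst : E -> V)
    (u v : V) (p : seq E) : bool :=
  match p with
  | [::] => false
  | e :: p' =>
      [&& src e == u,
          dst (last e p') == v,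
          path (fun e1 e2 => dst e1 == src e2) e p'
        & uniq (path_vertices src dst p)]
  end.

Definition cweight (R : numDomainType) (E : Type) (M : eqType)
    (col : E -> M) (w : E -> R) (c : M) (p : seq E) : R :=
  \sum_(e <- p | col e == c) w e.

Definition cle (R : numDomainType) (E : Type) (M : finType)
    (col : E -> M) (w : E -> R) (p q : seq E) : Prop :=
  forall c : M, cweight col w c p <= cweight col w c q.

Definition is_minimal_path (R : numDomainType) (V : eqType) (E : Type)
    (M : finType) (src dst : E -> V) (col : E -> M) (w : E -> R)
    (u v : V) (p : seq E) : Prop :=
  is_cpath src dst u v p /\
  ~ (exists q : seq E,
        is_cpath src dst u v q /\ cle col w q p /\
        exists c : M, cweight col w c q < cweight col w c p).

(* Main.v *)
Require Import Defs.
From HB Require Import structures.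
From mathcomp Require Import all_boot all_order all_algebra.
From mathcomp Require Import lra.
Set Implicit Arguments. Unset Strict Implicit. Unset Printing Implicit Defensive.
Import Order.TTheory GRing.Theory Num.Theory.
Local Open Scope ring_scope.

Fixpoint walk (V : eqType) (E : Type) (src dst : E -> V) (x : V) (p : seq E) : bool :=
  if p is e :: p' then (src e == x) && walk src dst (dst e) p' else true.

Definition endv (V : Type) (E : Type) (dst : E -> V) (x : V) (p : seq E) : V :=
  last x (map dst p).

Lemma walk_cat (V : eqType) (E : Type) (src dst : E -> V) x p1 p2 :
  walk src dst x (p1 ++ p2) = walk src dst x p1 && walk src dst (endv dst x p1) p2.
Proof.
elim: p1 x => [|e p1 IH] x //=; rewrite IH andbA //.
Qed.

Lemma endv_cat (V : Type) (E : Type) (dst : E -> V) x p1 p2 :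
  endv dst x (p1 ++ p2) = endv dst (endv dst x p1) p2.
Proof. by rewrite /endv map_cat last_cat. Qed.

Lemma endv_cons (V : Type) (E : Type) (dst : E -> V) x e p :
  endv dst x (e :: p) = endv dst (dst e) p.
Proof. by []. Qed.

Lemma path_walk (V : eqType) (E : Type) (src dst : E -> V) e p :
  path (fun e1 e2 => dst e1 == src e2) e p = walk src dst (dst e) p.
Proof.
elim: p e => [|e' p IH] e //=; by rewrite IH eq_sym.
Qed.

Lemma cpathE (V : eqType) (E : Type) (src dst : E -> V) u v p :
  is_cpath src dst u v p =
  [&& ~~ nilp p, walk src dst u p, endv dst u p == v & uniq (u :: map dst p)].
Proof.
case: p => [|e p] //=.
rewrite path_walk /endv /= last_map.
case: eqP => [->|] //=.
by case: (dst (last e p) == v); case: walk.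
Qed.

Lemma walk_inj (V : eqType) (E : Type) (src dst : E -> V) x y s :
  walk src dst x s -> walk src dst y s -> endv dst x s = endv dst y s -> x = y.
Proof.
case: s => [|e s] /=; first by [].
by move=> /andP[/eqP <- _] /andP[/eqP <- _].
Qed.

Definition incol (V : eqType) (E : Type) (M : eqType) (dst : E -> V) (col : E -> M)
  (p : seq E) (x : V) : option M :=
  ohead [seq col e | e <- p & dst e == x].

Lemma incol_cons (V : eqType) (E : Type) (M : eqType) (dst : E -> V) (col : E -> M) e p x :
  incol dst col (e :: p) x = if dst e == x then Some (col e) else incol dst col p x.
Proof. by rewrite /incol /=; case: (dst e == x). Qed.

Lemma incol_mem (V : eqType) (E : eqType) (M : eqType) (dst : E -> V) (col : E -> M) p e :
  uniq (map dst p) -> e \in p -> incol dst col p (dst e) = Some (col e).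
Proof.
elim: p => [|e' p IH] //= /andP[nin up]; rewrite inE incol_cons.
case/orP => [/eqP ->|ep]; first by rewrite eqxx.
case: eqP => [de|]; last by move=> _; exact: IH.
by case/negP: nin; rewrite de; apply/mapP; exists e.
Qed.

Lemma incol_some (V : eqType) (E : Type) (M : eqType) (dst : E -> V) (col : E -> M) p x :
  incol dst col p x != None -> x \in map dst p.
Proof.
elim: p => [|e p IH] //=; rewrite incol_cons inE.
case: (dst e =P x) => [-> _|_ /IH ->]; by rewrite ?eqxx ?orbT.
Qed.

Lemma split_at (V : eqType) (E : Type) (dst : E -> V) u b p :
  b \in u :: map dst p -> exists P1 P2, p = P1 ++ P2 /\ endv dst u P1 = b.
Proof.
elim: p u => [|e p IH] u.
  by rewrite mem_seq1 => /eqP ->; exists [::], [::].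
rewrite inE; case: (b =P u) => [-> _|_ /= H]; first by exists [::], (e :: p).
have [P1 [P2 [-> H2]]] := IH (dst e) H.
by exists (e :: P1), P2.
Qed.

Lemma cweight_cat (R : numDomainType) (E : Type) (M : eqType) (col : E -> M) (w : E -> R) c p q :
  cweight col w c (p ++ q) = cweight col w c p + cweight col w c q.
Proof. by rewrite /cweight big_cat. Qed.

Lemma cweight_cons (R : numDomainType) (E : Type) (M : eqType) (col : E -> M) (w : E -> R) c e p :
  cweight col w c (e :: p) = (if col e == c then w e else 0) + cweight col w c p.
Proof. by rewrite /cweight big_cons; case: (col e == c); rewrite ?add0r. Qed.

Lemma cweight_ge0 (R : numDomainType) (E : Type) (M : eqType) (col : E -> M) (w : E -> R) c p :
  (forall e, 0 < w e) -> 0 <= cweight col w c p.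
Proof. move=> hw; rewrite /cweight; apply: sumr_ge0 => e _; exact: ltW. Qed.

Lemma half_step (R : realFieldType) (V : eqType) (E : Type) (M : finType)
  (src dst : E -> V) (col : E -> M) (w : E -> R) u v P1 P2 ea eb s :
  (forall e, 0 < w e) ->
  is_minimal_path src dst col w u v (P1 ++ P2 ++ ea :: s) ->
  is_cpath src dst u v (P1 ++ eb :: s) -> ~~ nilp P2 -> col ea = col eb -> w ea < w eb.
Proof.
move=> hw [_ hmin] hr hP2 hc.
rewrite ltNge; apply/negP => hle; apply: hmin.
exists (P1 ++ eb :: s); split => //; split.
  move=> c; rewrite !cweight_cat !cweight_cons hc.
  have := cweight_ge0 col c P2 hw.
  by case: (col eb == c) => /=; lra.
case: P2 hP2 => [|e0 P2] // _.
exists (col e0); rewrite !cweight_cat !cweight_cons eqxx hc.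
have := cweight_ge0 col (col e0) P2 hw; have := hw e0.
by case: (col eb == col e0) => /=; lra.
Qed.

Lemma empty_case (V : eqType) (E : Type) (src dst : E -> V) u v s q' eb :
  is_cpath src dst u v s -> is_cpath src dst u v (q' ++ eb :: s) -> False.
Proof.
rewrite !cpathE => /and4P[hs hws _ _] /and4P[_ hwq _ hu].
case: s hs hws hwq hu => [|e0 s] // _ /= /andP[/eqP h0 _].
rewrite walk_cat => /andP[_] /= /and3P[_ /eqP h1 _].
rewrite map_cat /= => /andP[/negP hn _]; apply: hn.
by rewrite mem_cat inE -h1 h0 eqxx orbT.
Qed.

Lemma struct_step (V : eqType) (E : eqType) (M : eqType)
  (src dst : E -> V) (col : E -> M) u v p' q' ea eb s :
  (forall e, src e != dst e) ->
  is_cpath src dst u v (p' ++ ea :: s) -> is_cpath src dst u v (q' ++ eb :: s) ->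
  (forall x, x != u -> incol dst col (p' ++ ea :: s) x = incol dst col (q' ++ eb :: s) x) ->
  dst ea = dst eb -> src ea != src eb ->
  exists P1 P2, p' = P1 ++ P2 /\ ~~ nilp P2 /\ is_cpath src dst u v (P1 ++ eb :: s).
Proof.
move=> hloop hp hq hinc hd hne.
move: (hp) (hq); rewrite !cpathE => /and4P[_ hwp hep hup] /and4P[_ hwq heq huq].
move: hwp; rewrite walk_cat => /andP[hwp' /= /andP[/eqP hsa hws]].
move: hwq; rewrite walk_cat => /andP[_ /= /andP[/eqP hsb hws']].
have hb : src eb \in u :: map dst p'.
  have : src eb \in u :: map dst q' by rewrite hsb /endv mem_last.
  rewrite !inE; case/orP => [-> //|hbq]; apply/orP; right.
  have hbu : src eb != u.
    apply/eqP => hbu; move: huq; rewrite /= map_cat => /andP[/negP hn _].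
    by apply: hn; rewrite mem_cat -hbu hbq.
  have huq' : uniq (map dst (q' ++ eb :: s)) by case/andP: huq.
  have hup' : uniq (map dst (p' ++ ea :: s)) by case/andP: hup.
  have : incol dst col (q' ++ eb :: s) (src eb) != None.
    case/mapP: hbq => e he hde; rewrite hde (incol_mem col huq') //.
    by rewrite mem_cat he.
  rewrite -hinc // => /incol_some; rewrite map_cat mem_cat inE.
  case/orP => [//|/orP[/eqP hh|hh]].
    by move: (hloop eb); rewrite hh hd eqxx.
  move: huq'; rewrite map_cat cat_uniq => /and3P[_ /hasPn hn _].
  by move: (hn (src eb)); rewrite /= inE hh orbT hbq => /(_ isT).
have [P1 [P2 [hp' hend]]] := split_at hb.
exists P1, P2; split => //; split.
  case: P2 hp' => [|e P2] // hp'.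
  move: hne; rewrite hsa hp' cats0 hend eqxx //.
rewrite cpathE; apply/and4P; split.
- by case: P1 {hp' hend}.
- rewrite walk_cat /= hend eqxx /= hws' andbT.
  by move: hwp'; rewrite hp' walk_cat => /andP[].
- by rewrite endv_cat endv_cons -hd; move: hep; rewrite endv_cat endv_cons.
- apply: subseq_uniq hup; rewrite hp' -catA !map_cat /= hd.
  have := cat_subseq (subseq_refl (u :: map dst P1))
     (suffix_subseq (map dst P2) (dst eb :: map dst s)).
  by rewrite !cat_cons.
Qed.

Lemma inj_gen (R : realFieldType) (V : eqType) (E : eqType) (M : finType)
  (src dst : E -> V) (col : E -> M) (w : E -> R) u v
  (hloop : forall e : E, src e != dst e)
  (hw : forall e : E, 0 < w e)
  (hsimple : forall e1 e2 : E,
        src e1 = src e2 -> dst e1 = dst e2 -> col e1 = col e2 -> e1 = e2) N :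
  forall p1 q1 s, (size p1 + size q1 <= N)%N ->
  is_minimal_path src dst col w u v (p1 ++ s) ->
  is_minimal_path src dst col w u v (q1 ++ s) ->
  (forall x, x != u -> incol dst col (p1 ++ s) x = incol dst col (q1 ++ s) x) ->
  p1 = q1.
Proof.
elim: N => [|N IH] p1 q1 s.
  by case: p1; case: q1.
case/lastP: p1 => [|p' ea]; case/lastP: q1 => [|q' eb] //.
- move=> _ [hp _] [hq _]; rewrite cat_rcons in hq.
  by case: (empty_case hp hq).
- move=> _ [hp _] [hq _]; rewrite cat_rcons in hp.
  by case: (empty_case hq hp).
rewrite !size_rcons addSn addnS ltnS !cat_rcons => hN hpm hqm hinc.
have [hp _] := hpm; have [hq _] := hqm.
move: (hp) (hq); rewrite !cpathE => /and4P[_ hwp hep hup] /and4P[_ hwq heq huq].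
move: hwp; rewrite walk_cat => /andP[_ /= /andP[_ hws]].
move: hwq; rewrite walk_cat => /andP[_ /= /andP[_ hws']].
have hd : dst ea = dst eb.
  apply: (walk_inj hws hws').
  by move: hep heq; rewrite !endv_cat !endv_cons => /eqP -> /eqP ->.
have hdu : dst ea != u.
  apply/eqP => hdu; move: hup => /= /andP[/negP hn _]; apply: hn.
  by rewrite -{1}hdu map_f // mem_cat mem_head orbT.
have hc : col ea = col eb.
  have := hinc _ hdu.
  rewrite (incol_mem col (_ : uniq _) (_ : ea \in _)); last first.
  - by rewrite mem_cat mem_head orbT.
  - by case/andP: hup.
  rewrite hd (incol_mem col (_ : uniq _) (_ : eb \in _)); last first.
  - by rewrite mem_cat mem_head orbT.
  - by case/andP: huq.
  by case.
have [heab|hne] := eqVneq ea eb.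
  subst eb.
  move=> {hd hc}; rewrite (IH p' q' (ea :: s)) //.
  exact: ltnW.
have hsne : src ea != src eb.
  by apply: contra hne => /eqP hs; apply/eqP; apply: hsimple.
have [P1 [P2 [hp' [hP2 hr]]]] := struct_step hloop hp hq hinc hd hsne.
have [Q1 [Q2 [hq' [hQ2 hr']]]] := struct_step (col := col) hloop hq hp
   (fun x hx => esym (hinc x hx)) (esym hd) (contra_neq esym hsne).
have h1 : w ea < w eb.
  have hm : is_minimal_path src dst col w u v (P1 ++ P2 ++ ea :: s).
    by rewrite catA -hp'.
  exact: half_step hw hm hr hP2 hc.
have h2 : w eb < w ea.
  have hm : is_minimal_path src dst col w u v (Q1 ++ Q2 ++ eb :: s).
    by rewrite catA -hq'.
  exact: half_step hw hm hr' hQ2 (esym hc).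
by move: (lt_trans h1 h2); rewrite ltxx.
Qed.

Theorem theorem3 (R : realFieldType) (V E M : finType)
    (src dst : E -> V) (col : E -> M) (w : E -> R)
    (n k : nat)
    (hn : #|V| = n) (hn2 : (2 <= n)%N) (hk : #|M| = k)
    (hloop : forall e : E, src e != dst e)
    (hw : forall e : E, 0 < w e)
    (hsurj : forall c : M, exists e : E, col e = c)
    (hsimple : forall e1 e2 : E,
        src e1 = src e2 -> dst e1 = dst e2 -> col e1 = col e2 -> e1 = e2)
    (u v : V) (huv : u != v)
    (ps : seq (seq E))
    (hps_uniq : uniq ps)
    (hps_min : forall p, p \in ps -> is_minimal_path src dst col w u v p) :
  (size ps <= k * (k + 1) ^ (n - 2))%N.
Proof.
case: ps hps_uniq hps_min => [|p0 ps0] // hps_uniq hps_min.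
have [m0] : exists m0 : M, true.
  have [hp0 _] := hps_min p0 (mem_head _ _).
  by move: hp0; case Hp: p0 => [|e l] // _; exists (col e).
move=> _.
pose D := {x : V | (x != u) && (x != v)}.
pose key (p : seq E) : (M * {ffun D -> option M})%type :=
  (odflt m0 (incol dst col p v), [ffun x : D => incol dst col p (val x)]).
set ps := p0 :: ps0 in hps_uniq hps_min *.
have hinv : forall p, is_cpath src dst u v p -> exists c, incol dst col p v = Some c.
  move=> p hp; move: (hp); rewrite cpathE => /and4P[hne _ /eqP hend hup].
  have : v \in map dst p.
    case: p hne hend {hp hup} => [|e p] // _ <-.
    by rewrite /endv /= mem_last.
  case/mapP => e he ->; exists (col e); apply: incol_mem => //.
  by case/andP: hup.
have hkey : {in ps &, injective key}.
  move=> p q hp hq [h1 /ffunP h2].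
  have hpm := hps_min p hp; have hqm := hps_min q hq.
  apply: (@inj_gen R V E M src dst col w u v hloop hw hsimple (size p + size q)%N p q [::]);
    rewrite ?cats0 //.
  move=> x hxu; case: (eqVneq x v) => [->|hxv].
    have [c1 e1] := hinv p hpm.1; have [c2 e2] := hinv q hqm.1.
    by move: h1; rewrite e1 e2 /= => ->.
  have hx : (x != u) && (x != v) by rewrite hxu hxv.
  by move: (h2 (exist _ x hx)); rewrite !ffunE.
have hu : uniq (map key ps) by rewrite (map_inj_in_uniq hkey).
have := max_card (mem (map key ps)).
rewrite (card_uniqP hu) size_map card_prod card_ffun card_option hk.
have -> : #|{: D}| = (n - 2)%N.
  rewrite card_sig.
  have h1 := cardD1 u (predT : {pred V}).
  have h2 := cardD1 v [predD1 predT & u].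
  rewrite inE /= eq_sym huv /= in h2.
  rewrite inE /= in h1.
  have -> : #|[pred x | (x != u) && (x != v)]| = #|[predD1 [predD1 predT & u] & v]|.
    by apply: eq_card => x; rewrite !inE /= andbT andbC.
  move: h1 h2; rewrite (eq_card (B := V)) //= hn => -> ->.
  by rewrite add1n add1n subSS subn1.
by rewrite addn1.
Qed.
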